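(* Let $n$ be a positive integer, $F$ a finite set of cardinality $n$ and $\sigma : F \to F$ a map. (i) For every $a \in F$ there exist nonnegative integers $k, l$ with $l \ge 1$, $\sigma^k(a) = \sigma^{k+l}(a)$ and $k + l \le n$. (ii) For every $a \in F$, if $\sigma^{k_i}(a) = \sigma^{k_i + l_i}(a)$ for $i = 1,2$ (with $k_i \ge 0$, $l_i \ge 1$), then $\sigma^k(a) = \sigma^{k+l}(a)$ for $(k,l) = (\min\{k_1,k_2\}, \gcd\{l_1,l_2\})$. (iii) For every $a \in F$ there is a unique pair $(k_a, l_a)$ of a nonnegative integer $k_a$ and a positive integer $l_a$ such that for all integers $k' \ge 0$, $l' \ge 1$: $\sigma^{k'}(a) = \sigma^{k'+l'}(a)$ if and only if $k_a \le k'$ and $l_a \mid l'$. (iv) Let $K = \max_{a \in F} k_a$ and $L = \operatorname{lcm}_{a \in F} l_a$. Then for all integers $K' \ge 0$, $L' \ge 1$: $\sigma^{K'} = \sigma^{K'+L'}$ if and only if $K \le K'$ and $L \mid L'$. (v) $K + \alpha(L) \le n$.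
   Context: $\sigma^k$ denotes the $k$-th iterate of $\sigma$ ($\sigma^0 = \mathrm{id}$). The function $\alpha : \mathbb{N} \to \mathbb{N}$ is defined by $\alpha(m) = \max\{p^e : p \text{ prime}, e \ge 0, p^e \mid m\}$, the largest prime-power divisor of $m$ (with $\alpha(1) = 1$). *)

(* Defs.v *)
From mathcomp Require Import all_boot.
Set Implicit Arguments. Unset Strict Implicit. Unset Printing Implicit Defensive.

(* d is a prime power p^e with p prime and e >= 0 (so 1 is a prime power).
   The bounds p <= d+1, e <= d are harmless: p^e = d >= 1 forces them. *)
Definition prime_powerb (d : nat) : bool :=
  [exists p : 'I_d.+2, exists e : 'I_d.+1, prime p && (p ^ e == d)].

Definition alpha (m : nat) : nat :=
  \max_(d < m.+1 | (d %| m) && prime_powerb d) d.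

(* Main.v *)
Require Import Defs.
From mathcomp Require Import all_boot zify.
Set Implicit Arguments. Unset Strict Implicit. Unset Printing Implicit Defensive.

Lemma iter_comm' (T : Type) (f : T -> T) m l z :
  iter l f (iter m f z) = iter m f (iter l f z).
Proof. by rewrite -!iterD addnC. Qed.

Lemma iter_shift (T : Type) (f : T -> T) k l a :
  iter (k + l) f a = iter l f (iter k f a).
Proof. by rewrite addnC iterD. Qed.

Lemma per_mul (T : Type) (f : T -> T) l y c :
  iter l f y = y -> iter (c * l) f y = y.
Proof. move=> H; elim: c => [|c IH] //; by rewrite mulSn iterD IH. Qed.

Lemma per_sub (T : Type) (f : T -> T) a b y :
  iter a f y = y -> iter b f y = y -> b <= a -> iter (a - b) f y = y.
Proof. move=> Ha Hb le. by rewrite -{1}Hb -iterD subnK. Qed.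

Lemma per_gcd (T : Type) (f : T -> T) l1 l2 y : 0 < l1 ->
  iter l1 f y = y -> iter l2 f y = y -> iter (gcdn l1 l2) f y = y.
Proof.
move=> l1p H1 H2. case: (Bezoutl l2 l1p) => c _ /dvdnP [d Hd].
have E1 : iter (d * l1) f y = y by apply: per_mul.
have E2 : iter (c * l2) f y = y by apply: per_mul.
rewrite (_ : gcdn l1 l2 = d * l1 - c * l2); last by rewrite -Hd addnK.
apply: per_sub => //. by rewrite -Hd leq_addl.
Qed.

Lemma per_up (T : Type) (f : T -> T) k j l a : k <= j ->
  iter k f a = iter (k + l) f a -> iter j f a = iter (j + l) f a.
Proof. move=> le H. by rewrite -(subnK le) -addnA iterD [in RHS]iterD -H. Qed.

Lemma part2 (T : Type) (f : T -> T) a k1 l1 k2 l2 : 1 <= l1 -> 1 <= l2 ->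
  iter k1 f a = iter (k1 + l1) f a -> iter k2 f a = iter (k2 + l2) f a ->
  iter (minn k1 k2) f a = iter (minn k1 k2 + gcdn l1 l2) f a.
Proof.
wlog le : k1 l1 k2 l2 / k1 <= k2.
  move=> W h1 h2 H1 H2. case: (boolP (k1 <= k2)) => le; first exact: (W _ _ _ _ le h1 h2 H1 H2).
  rewrite -ltnNge in le. rewrite minnC gcdnC. exact: (W k2 l2 k1 l1 (ltnW le) h2 h1 H2 H1).
move=> h1 h2 H1 H2. rewrite (minn_idPl le).
set y := iter k2 f a.
have Y1 : iter l1 f y = y by rewrite /y -iter_shift -(per_up le H1).
have Y2 : iter l2 f y = y by rewrite /y -iter_shift -H2.
have Yg := per_gcd h1 Y1 Y2.
rewrite iter_shift. set z := iter k1 f a.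
have Z1 : iter l1 f z = z by rewrite /z -iter_shift -H1.
have Zm : iter (k2 * l1) f z = z by apply: per_mul.
have E : iter (k2 * l1) f z = iter (k2 * l1 + k1 - k2) f y.
  rewrite /z /y -!iterD subnK //. nia.
by rewrite -{2}Zm E iter_comm' Yg -E Zm.
Qed.

Lemma char_uniq (P : nat -> nat -> Prop) k1 l1 k2 l2 :
  (forall k' l', 1 <= l' -> P k' l' <-> k1 <= k' /\ l1 %| l') ->
  (forall k' l', 1 <= l' -> P k' l' <-> k2 <= k' /\ l2 %| l') ->
  1 <= l1 -> 1 <= l2 -> k1 = k2 /\ l1 = l2.
Proof.
move=> H1 H2 p1 p2.
have [a1 b1] : k2 <= k1 /\ l2 %| l1 by apply/H2 => //; apply/H1.
have [a2 b2] : k1 <= k2 /\ l1 %| l2 by apply/H1 => //; apply/H2.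
split; first lia. by apply/eqP; rewrite eqn_dvd b1 b2.
Qed.

Lemma part1 (F : finType) (f : F -> F) n a : #|F| = n ->
  exists k l : nat, [/\ 1 <= l, iter k f a = iter (k + l) f a & k + l <= n].
Proof.
move=> cF.
case: (boolP [exists i : 'I_n.+1, exists j : 'I_n.+1,
                (i < j) && (iter i f a == iter j f a)]).
  case/existsP => i /existsP [j /andP [ij /eqP E]].
  exists i, (j - i); split; first by rewrite subn_gt0.
    by rewrite (subnKC (ltnW ij)).
  rewrite (subnKC (ltnW ij)). by have := ltn_ord j.
move=> /negP N. exfalso.
have inj : injective (fun i : 'I_n.+1 => iter i f a).
  move=> i j /= E. apply/val_inj => /=.
  case: (ltngtP i j) => // h; exfalso; apply: N; apply/existsP.
    by exists i; apply/existsP; exists j; rewrite h E eqxx.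
  by exists j; apply/existsP; exists i; rewrite h E eqxx.
have := leq_card _ inj. by rewrite card_ord cF ltnn.
Qed.

Lemma part3 (T : eqType) (f : T -> T) a k0 l0 : 1 <= l0 ->
  iter k0 f a = iter (k0 + l0) f a ->
  exists ka la, 1 <= la /\ forall k' l', 1 <= l' ->
    (iter k' f a = iter (k' + l') f a <-> ka <= k' /\ la %| l').
Proof.
move=> hl0 H0.
have key : forall k l, 1 <= l -> iter k f a = iter (k + l) f a ->
    iter k f a = iter (k + l0) f a.
  move=> k l hl H. case: (boolP (k <= k0)) => hk.
    have := part2 hl hl0 H H0. rewrite (minn_idPl hk) => G.
    have Gz : iter (gcdn l l0) f (iter k f a) = iter k f a
      by rewrite -iter_shift -G.
    case/dvdnP: (dvdn_gcdr l l0) => c Hc.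
    by rewrite Hc iter_shift (per_mul c Gz).
  rewrite -ltnNge in hk. exact: per_up (ltnW hk) H0.
pose P := fun k => iter k f a == iter (k + l0) f a.
have exP : exists k, P k by exists k0; apply/eqP.
case: (ex_minnP exP) => ka /eqP Pka minka.
pose Q := fun l => (0 < l) && (iter ka f a == iter (ka + l) f a).
have exQ : exists l, Q l by exists l0; rewrite /Q hl0; apply/eqP.
case: (ex_minnP exQ) => la /andP [la0 /eqP Qla] minla.
exists ka, la; split => // k' l' hl'. split.
  move=> H. have hk : ka <= k' by apply: minka; apply/eqP; exact: key H.
  split => //. have := part2 la0 hl' Qla H. rewrite (minn_idPl hk) => G.
  have g0 : 0 < gcdn la l' by rewrite gcdn_gt0 la0.
  have le : la <= gcdn la l' by apply: minla; rewrite /Q g0; apply/eqP.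
  have Eg : gcdn la l' = la.
    by apply/eqP; rewrite eqn_leq le dvdn_leq // dvdn_gcdl.
  by rewrite -Eg dvdn_gcdr.
case=> hk /dvdnP [c ->]. apply: (per_up hk).
have Y : iter la f (iter ka f a) = iter ka f a by rewrite -iter_shift -Qla.
by rewrite iter_shift (per_mul c Y).
Qed.

Lemma biglcm_pp (F : finType) (g : F -> nat) p e (x0 : F) : prime p ->
  p ^ e %| \big[lcmn/1]_(a : F) g a -> exists a, p ^ e %| g a.
Proof.
move=> pp. case: e => [|e]; first by exists x0; rewrite expn0 dvd1n.
elim/big_rec: _ => [|i x _ IH].
  rewrite dvdn1 expnS muln_eq1 => /andP [/eqP p1 _]. by rewrite p1 in pp.
case: (posnP x) => [x0'|xpos]; first by move=> _; apply: IH; rewrite x0' dvdn0.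
case: (posnP (g i)) => [gi0|gpos]; first by exists i; rewrite gi0 dvdn0.
rewrite pfactor_dvdn // ?lcmn_gt0 ?gpos ?xpos // logn_lcm // leq_max.
case/orP => h; first by exists i; rewrite pfactor_dvdn.
by apply: IH; rewrite pfactor_dvdn.
Qed.

Lemma core (F : finType) (f : F -> F) (ka la : F -> nat)
  (H : forall a : F, 1 <= la a /\
        forall k' l' : nat, 1 <= l' ->
          (iter k' f a = iter (k' + l') f a <-> ka a <= k' /\ la a %| l'))
  a0 b : ka a0 + la b <= #|F|.
Proof.
have perT : forall i z l, 1 <= l -> iter l f z = z -> iter i f a0 = z -> ka a0 <= i.
  move=> i z l hl Hz Ei.
  have : iter i f a0 = iter (i + l) f a0 by rewrite iter_shift Ei Hz.
  by case/((H a0).2 _ _ hl).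
set y := iter (ka b) f b.
have Yl : iter (la b) f y = y.
  have : iter (ka b) f b = iter (ka b + la b) f b.
    by apply/((H b).2 _ _ (H b).1); split.
  by move=> E; rewrite /y -iter_shift -E.
pose s := [seq iter i f a0 | i <- iota 0 (ka a0)] ++ [seq iter i f y | i <- iota 0 (la b)].
have Us : uniq s.
  rewrite cat_uniq; apply/and3P; split.
  - rewrite map_inj_in_uniq ?iota_uniq // => i j; rewrite !mem_iota !add0n !leq0n /=.
    move=> hi hj E.
    case: (ltngtP i j) => // h; exfalso.
      have : ka a0 <= i.
        apply: (perT i (iter i f a0) (j - i)) => //; first by rewrite subn_gt0.
        by rewrite -iterD subnK ?(ltnW h) // E.
      by rewrite leqNgt hi.
    have : ka a0 <= j.
      apply: (perT j (iter j f a0) (i - j)) => //; first by rewrite subn_gt0.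
      by rewrite -iterD subnK ?(ltnW h) // E.
    by rewrite leqNgt hj.
  - apply/hasPn => z /mapP [j _ ->]. apply/negP => /mapP [i].
    rewrite mem_iota add0n leq0n /= => hi E.
    have : ka a0 <= i.
      apply: (perT i (iter j f y) (la b)); first exact: (H b).1.
        by rewrite iter_comm' Yl.
      by rewrite E.
    by rewrite leqNgt hi.
  - rewrite map_inj_in_uniq ?iota_uniq // => i j; rewrite !mem_iota !add0n !leq0n /=.
    move=> hi hj E.
    have cyc : forall i j, i < j -> j < la b -> iter i f y = iter j f y -> False.
      move=> i' j' h hj' E'.
      have : ka b <= ka b + i' /\ la b %| j' - i'.
        apply/((H b).2 _ _ _); first by rewrite subn_gt0.
        by rewrite -addnA (subnKC (ltnW h)) !iter_shift -/y.
      case=> _ hd.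
      have hp : 0 < j' - i' by rewrite subn_gt0.
      have := dvdn_leq hp hd. lia.
    case: (ltngtP i j) => // h; exfalso; first exact: cyc h hj E.
    exact: cyc h hi (esym E).
move/card_uniqP: Us => Us.
have := max_card (mem s). rewrite Us size_cat !size_map !size_iota.
by [].
Qed.

Theorem lemma3p1 (n : nat) (F : finType) (sigma : F -> F) :
  0 < n -> #|F| = n ->
  (* (i) *)
  (forall a : F, exists k l : nat,
     [/\ 1 <= l, iter k sigma a = iter (k + l) sigma a & k + l <= n]) /\
  (* (ii) *)
  (forall (a : F) (k1 l1 k2 l2 : nat), 1 <= l1 -> 1 <= l2 ->
     iter k1 sigma a = iter (k1 + l1) sigma a ->
     iter k2 sigma a = iter (k2 + l2) sigma a ->
     iter (minn k1 k2) sigma a = iter (minn k1 k2 + gcdn l1 l2) sigma a) /\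
  (* (iii) *)
  (forall a : F, exists! kl : nat * nat,
     1 <= kl.2 /\
     forall k' l' : nat, 1 <= l' ->
       (iter k' sigma a = iter (k' + l') sigma a <-> kl.1 <= k' /\ kl.2 %| l')) /\
  (* (iv) and (v), for the pairs (k_a, l_a) characterized in (iii) *)
  (forall ka la : F -> nat,
     (forall a : F, 1 <= la a /\
        forall k' l' : nat, 1 <= l' ->
          (iter k' sigma a = iter (k' + l') sigma a <-> ka a <= k' /\ la a %| l')) ->
     let K := \max_(a : F) ka a in
     let L := \big[lcmn/1]_(a : F) la a in
     (forall K' L' : nat, 1 <= L' ->
        ((forall x : F, iter K' sigma x = iter (K' + L') sigma x) <->
         K <= K' /\ L %| L')) /\
     K + alpha L <= n).
Proof.
move=> n0 cF.
have P1 : forall a : F, exists k l : nat,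
     [/\ 1 <= l, iter k sigma a = iter (k + l) sigma a & k + l <= n].
  move=> a; exact: part1.
split; first exact: P1.
split; first by move=> a k1 l1 k2 l2; apply: part2.
split.
  move=> a. have [k0 [l0 [hl0 H0 _]]] := P1 a.
  have [ka [la [hla Hc]]] := part3 hl0 H0.
  exists (ka, la); split; first by split.
  case=> k l [hl Hk].
  have [e1 e2] := char_uniq Hc Hk hla hl. by rewrite e1 e2.
move=> ka la H K L. split.
  move=> K' L' hL'. split.
    move=> A. have B : forall a, ka a <= K' /\ la a %| L'.
      by move=> a; apply/((H a).2 _ _ hL').
    split; first by apply/bigmax_leqP => a _; exact: (B a).1.
    by apply/dvdn_biglcmP => a _; exact: (B a).2.
  case=> hK hL x. apply/((H x).2 _ _ hL'). split.
    exact: leq_trans (leq_bigmax x) hK.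
  apply: dvdn_trans hL. by apply: (biglcmn_sup x).
have card0 : 0 < #|F| by rewrite cF.
have [x0 _] := card_gt0P card0.
have la0 : forall a, 0 < la a by move=> a; exact: (H a).1.
have [b Mb] := eq_bigmax la card0.
have [a0 Ka] := eq_bigmax ka card0.
have Hb : alpha L <= la b.
  rewrite -Mb /alpha. apply/bigmax_leqP => d /andP [dL].
  case/existsP => p /existsP [e /andP [pp /eqP pe]].
  have [a ha] : exists a, p ^ e %| la a.
    apply: (biglcm_pp x0 pp). by rewrite pe.
  rewrite -pe. exact: leq_trans (dvdn_leq (la0 a) ha) (leq_bigmax a).
have := core H a0 b. rewrite -cF /K Ka. move=> h. exact: leq_trans (leq_add (leqnn _) Hb) h.
Qed.
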